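(* In the reward setting described in the context, for every choice of $\bar d\le D/2$ there is an instance (whose second largest expected delay is $\bar d$) for which every algorithm has pseudo-regret $\Omega(\bar d)$.
   Context: Delay-as-payoff bandit: there are $K$ arms, a horizon $T$ and a maximum delay $D$. Each arm $i$ has a distribution $\mathcal{D}_i$ on $\{0,1,\dots,D\}$; at each step $t$ the agent chooses $i_t$ based on observed feedback, a delay $d_t\sim\mathcal{D}_{i_t}$ is drawn independently and revealed only at time $t+d_t$; the payoff is the reward $r_t=d_t/D$, to be maximized. Let $\mu(i)=\mathbb{E}_{X\sim\mathcal{D}_i}[X/D]$, $d(i)=D\mu(i)$, $\mu^*=\max_i\mu(i)$, and $\bar d$ the second largest value among $d(1),\dots,d(K)$. Pseudo-regret: $T\mu^*-\mathbb{E}[\sum_{t=1}^T r_t]$. *)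

(* Defs.v *)
From mathcomp Require Import all_boot all_order all_algebra.
Set Implicit Arguments. Unset Strict Implicit. Unset Printing Implicit Defensive.
Import Order.TTheory GRing.Theory Num.Theory.
Local Open Scope ring_scope.

Section Bandit.
Variables (R : realFieldType) (K D : nat).

Notation arm := 'I_K.
Notation delay := 'I_D.+1.

Definition instance := arm -> delay -> R.
Definition is_instance (nu : instance) : Prop :=
  (forall i x, 0 <= nu i x) /\ (forall i, \sum_(x : delay) nu i x = 1).

Definition mu (nu : instance) (i : arm) : R :=
  \sum_(x : delay) nu i x * ((x : nat)%:R / D%:R).
Definition dexp (nu : instance) (i : arm) : R := D%:R * mu nu i.
Definition mu_star (nu : instance) : R := \big[Num.max/0]_(i : arm) mu nu i.

Definition second_largest_delay (nu : instance) : R :=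
  nth 0 (sort (fun x y : R => y <= x) [seq dexp nu i | i <- enum arm]) 1.

(* Feedback of step s (delay d) is revealed at time s + d; at decision time
   t = size h the agent sees it iff s + d < t. *)
Definition observe (h : seq (arm * delay)) : seq (arm * option delay) :=
  [seq (sp.2.1, if (sp.1 + sp.2.2 < size h)%N then Some sp.2.2 else None)
  | sp : nat * (arm * delay) <- zip (iota 0 (size h)) h].

Definition policy := seq (arm * option delay) -> arm -> R.
Definition is_policy (alg : policy) : Prop :=
  forall o, (forall i, 0 <= alg o i) /\ \sum_(i : arm) alg o i = 1.

Definition traj_prob (nu : instance) (alg : policy) (T : nat)
  (h : T.-tuple (arm * delay)) : R :=
  \prod_(s < T) (alg (observe (take s h)) (tnth h s).1
                 * nu (tnth h s).1 (tnth h s).2).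

Definition expected_reward (nu : instance) (alg : policy) (T : nat) : R :=
  \sum_(h : T.-tuple (arm * delay))
     traj_prob nu alg h * \sum_(s < T) (((tnth h s).2 : nat)%:R / D%:R).

Definition pseudo_regret (nu : instance) (alg : policy) (T : nat) : R :=
  T%:R * mu_star nu - expected_reward nu alg T.

End Bandit.

(* Main.v *)
Require Import Defs.
From mathcomp Require Import all_boot all_order all_algebra.
From mathcomp Require Import ring lra.
Import Order.TTheory GRing.Theory Num.Theory.
Local Open Scope ring_scope.
Set Implicit Arguments. Unset Strict Implicit. Unset Printing Implicit Defensive.

Section Aux.
Variables (R : realFieldType) (K D : nat).
Notation arm := 'I_K.
Notation delay := 'I_D.+1.
Notation hist := (seq (arm * delay)).
Variables (nu : instance R K D) (alg : policy R K D).
Hypotheses (nuP : is_instance nu) (algP : is_policy alg).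

Fixpoint Ef (r : nat) (h : hist) (F : hist -> R) : R :=
  match r with
  | 0 => F h
  | r'.+1 => \sum_(x : arm * delay) alg (observe h) x.1 * nu x.1 x.2 * Ef r' (rcons h x) F
  end.

Lemma wsumE h (G : arm * delay -> R) :
  \sum_(x : arm * delay) alg (observe h) x.1 * nu x.1 x.2 * G x =
  \sum_(i : arm) alg (observe h) i * \sum_(d : delay) nu i d * G (i, d).
Proof.
transitivity (\sum_(i : arm) \sum_(d : delay) alg (observe h) i * nu i d * G (i, d)).
  by rewrite pair_bigA /=; apply: eq_bigr => -[].
by apply: eq_bigr => i _; rewrite mulr_sumr; apply: eq_bigr => d _; rewrite mulrA.
Qed.

Lemma wsum1 h : \sum_(x : arm * delay) alg (observe h) x.1 * nu x.1 x.2 * 1 = 1.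
Proof.
rewrite wsumE -[RHS](proj2 (algP (observe h))); apply: eq_bigr => i _.
by rewrite (eq_bigr (fun d => nu i d)) ?(proj2 nuP i) ?mulr1 // => d _; rewrite mulr1.
Qed.

Lemma w_ge0 h (x : arm * delay) : 0 <= alg (observe h) x.1 * nu x.1 x.2.
Proof. by apply: mulr_ge0; [apply: (proj1 (algP _)) | apply: (proj1 nuP)]. Qed.

Lemma Ef_const r h c : Ef r h (fun _ => c) = c.
Proof.
elim: r h => [//|r IH] h /=.
under eq_bigr do rewrite IH.
rewrite -mulr_suml; have := wsum1 h; under eq_bigr do rewrite mulr1. idtac.
by move=> ->; rewrite mul1r.
Qed.

Lemma Ef_add r h F G : Ef r h (fun h => F h + G h) = Ef r h F + Ef r h G.
Proof.
elim: r h => [//|r IH] h /=.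
by rewrite -big_split; apply: eq_bigr => x _; rewrite IH mulrDr.
Qed.

Lemma Ef_sub r h F G : Ef r h (fun h => F h - G h) = Ef r h F - Ef r h G.
Proof.
elim: r h => [//|r IH] h /=.
by rewrite -sumrB; apply: eq_bigr => x _; rewrite IH mulrBr.
Qed.

Lemma Ef_scale r h c F : Ef r h (fun h => c * F h) = c * Ef r h F.
Proof.
elim: r h => [//|r IH] h /=.
rewrite mulr_sumr; apply: eq_bigr => x _; rewrite IH.
by rewrite mulrCA.
Qed.

Lemma Ef_sum r h n (F : 'I_n -> hist -> R) :
  Ef r h (fun h => \sum_(k < n) F k h) = \sum_(k < n) Ef r h (F k).
Proof.
elim: r h => [//|r IH] h /=.
rewrite exchange_big /=; apply: eq_bigr => x _; rewrite IH mulr_sumr //.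
Qed.

Lemma Ef_mono r h F G : (forall h, F h <= G h) -> Ef r h F <= Ef r h G.
Proof.
move=> FG; elim: r h => [//|r IH] h /=.
by apply: ler_sum => x _; apply: ler_wpM2l; [apply: w_ge0 | apply: IH].
Qed.

Lemma Ef_comp s r h F : Ef (s + r) h F = Ef s h (fun h' => Ef r h' F).
Proof.
elim: s h => [//|s IH] h /=.
by apply: eq_bigr => x _; rewrite IH.
Qed.

Lemma Ef_ext r h F G :
  (forall h', size h' = r -> F (h ++ h') = G (h ++ h')) -> Ef r h F = Ef r h G.
Proof.
elim: r h => [|r IH] h FG /=; first by rewrite -(cats0 h); apply: FG.
apply: eq_bigr => x _; congr (_ * _); apply: IH => h' sh'.
by rewrite cat_rcons; apply: FG; rewrite /= sh'.
Qed.

Lemma Ef_fix r h F c :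
  (forall h', size h' = r -> F (h ++ h') = c) -> Ef r h F = c.
Proof.
by move=> Fc; rewrite (@Ef_ext r h F (fun _ => c)) ?Ef_const.
Qed.

Definition Pp (h0 : hist) T (h : T.-tuple (arm * delay)) : R :=
  \prod_(s < T) (alg (observe (h0 ++ take s h)) (tnth h s).1
                 * nu (tnth h s).1 (tnth h s).2).

Lemma tuple_sum T h0 (F : hist -> R) :
  \sum_(h : T.-tuple (arm * delay)) Pp h0 h * F (h0 ++ h) = Ef T h0 F.
Proof.
elim: T h0 => [|T IH] h0.
  rewrite (big_pred1 [tuple]) => [|t]; last by rewrite [t]tuple0 /= eq_refl.
  by rewrite /Pp big_ord0 mul1r /= cats0.
rewrite (reindex (fun p : (arm * delay) * T.-tuple (arm * delay) => [tuple of p.1 :: p.2])) /=; last first.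
  exists (fun t : T.+1.-tuple (arm * delay) => (thead t, [tuple of behead t])).
    by move=> [x t] _ /=; rewrite theadE; congr pair; apply: val_inj.
  by move=> t _ /=; rewrite [in RHS](tuple_eta t).
rewrite -(pair_bigA _ (fun x (t : T.-tuple (arm * delay)) => Pp h0 [tuple of x :: t] * F (h0 ++ [tuple of x :: t]))) /=.
apply: eq_bigr => x _.
rewrite -IH mulr_sumr; apply: eq_bigr => t _.
rewrite /Pp big_ord_recl /= -!mulrA; congr (_ * (_ * _)).
  by rewrite cats0 (tnth_nth x).
rewrite !cat_rcons; congr (_ * _); apply: eq_bigr => s _.
by rewrite !(tnth_nth x) /= add0n cat_rcons.
Qed.

Definition fd (x : arm * delay) : nat := x.2.

Lemma ER_Ef T : expected_reward nu alg T =
  Ef T [::] (fun h => \sum_(s < T) (nth 0%N (map fd h) s)%:R / D%:R).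
Proof.
rewrite /expected_reward -(tuple_sum _ [::]); apply: eq_bigr => h _.
congr (_ * _); apply: eq_bigr => s _.
by rewrite /= (nth_map (tnth h s)) ?size_tuple // -tnth_nth.
Qed.

Lemma step_Ef T s : (s < T)%N ->
  Ef T [::] (fun h => (nth 0%N (map fd h) s)%:R / D%:R) =
  Ef s [::] (fun h => \sum_(i : arm) alg (observe h) i * mu nu i).
Proof.
move=> sT; have -> : T = (s + (T - s).-1.+1)%N.
  by rewrite prednK ?subn_gt0 // subnKC // ltnW.
rewrite Ef_comp; apply: Ef_ext => h' sh' /=.
rewrite wsumE; apply: eq_bigr => i _; congr (_ * _); rewrite /mu.
apply: eq_bigr => d _; congr (_ * _); apply: Ef_fix => h'' _.
by rewrite map_cat nth_cat size_map size_rcons sh' ltnSn map_rcons nth_rcons size_map sh' ltnn eqxx.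
Qed.

Lemma obs_gen (m n k : nat) (s : hist) : (n <= m)%N -> all (fun x : arm * delay => m <= x.2)%N s ->
  [seq (sp.2.1, if (sp.1 + sp.2.2 < n)%N then Some sp.2.2 else None)
  | sp : nat * (arm * delay) <- zip (iota k (size s)) s] = [seq (x.1, None) | x <- s].
Proof.
move=> nm; elim: s k => [//|x s IH] k /= /andP[xm sm].
rewrite IH //; congr ((_, _) :: _).
have -> : (k + x.2 < n)%N = false; last by [].
by apply/negbTE; rewrite -leqNgt (leq_trans nm) // (leq_trans xm) // leq_addl.
Qed.

Lemma obs_blind (m : nat) h : (size h <= m)%N -> all (fun x : arm * delay => m <= x.2)%N h ->
  observe h = [seq (x.1, None) | x <- h].
Proof. by move=> hm ha; rewrite /observe (@obs_gen m). Qed.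

Definition noobs (a : seq arm) : seq (arm * option delay) := [seq (i, None) | i <- a].

Fixpoint Ub (r : nat) (a : seq arm) (G : seq arm -> R) : R :=
  match r with
  | 0 => G a
  | r'.+1 => \sum_(i : arm) alg (noobs a) i * Ub r' (rcons a i) G
  end.

Lemma blind (m : nat) (supp : forall i (d : delay), (d < m)%N -> nu i d = 0) r h0 F G :
  (size h0 + r <= m.+1)%N -> all (fun x : arm * delay => m <= x.2)%N h0 ->
  (forall h', size h' = r -> all (fun x : arm * delay => m <= x.2)%N h' ->
      F (h0 ++ h') = G (map fst (h0 ++ h'))) ->
  Ef r h0 F = Ub r (map fst h0) G.
Proof.
elim: r h0 => [|r IH] h0 hs ha FG /=.
  by have := FG [::] erefl erefl; rewrite cats0.
rewrite wsumE (@obs_blind m); last by []; last by rewrite addnS ltnS in hs; rewrite (leq_trans _ hs) // leq_addr.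
have -> : [seq (x.1, None) | x <- h0] = noobs (map fst h0) by rewrite /noobs -map_comp.
apply: eq_bigr => i _; congr (_ * _).
rewrite (eq_bigr (fun d => nu i d * Ub r (rcons (map fst h0) i) G)).
  by rewrite -mulr_suml (proj2 nuP i) mul1r.
move=> d _; case: (ltnP d m) => dm; first by rewrite supp // !mul0r.
congr (_ * _); have -> : rcons (map fst h0) i = map fst (rcons h0 (i, d)) by rewrite map_rcons.
apply: IH.
- by rewrite size_rcons addSnnS.
- by rewrite all_rcons /= dm.
- move=> h' sh' ha'; rewrite cat_rcons; apply: FG; first by rewrite /= sh'.
  by rewrite /= dm.
Qed.
End Aux.

Section Inst.
Variables (R : realFieldType) (K D : nat).
Notation arm := 'I_K.
Notation delay := 'I_D.+1.

Lemma sum_ifeq n k (c : R) (g : nat -> R) : (k < n)%N ->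
  \sum_(d < n) (if (d : nat) == k then c else 0) * g d = c * g k.
Proof.
move=> kn; rewrite (bigD1 (Ordinal kn)) //= eqxx big1 ?addr0 // => d dk.
have -> : ((d : nat) == k) = false; last by rewrite mul0r.
by apply/negbTE; apply: contra dk => /eqP dk; apply/eqP; apply: val_inj.
Qed.

Lemma sum_ifeq1 n k (c : R) : (k < n)%N ->
  \sum_(d < n) (if (d : nat) == k then c else 0) = c.
Proof.
move=> kn; rewrite -[RHS]mulr1 -(sum_ifeq c (fun _ => 1) kn).
by apply: eq_bigr => d _; rewrite mulr1.
Qed.

Definition nuI (j : arm) (m : nat) (p : R) : instance R K D :=
  fun i d => if i == j then (if (d : nat) == D then 1 else 0)
             else (if (d : nat) == D then p else 0) + (if (d : nat) == m then 1 - p else 0).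

Variables (j : arm) (m : nat) (p : R).
Hypotheses (mD : (m < D)%N) (p0 : 0 <= p) (p1 : p <= 1).

Lemma nuI_inst : is_instance (nuI j m p).
Proof.
split.
  move=> i d; rewrite /nuI; case: (i == j); first by case: eqP.
  by apply: addr_ge0; [case: eqP | case: eqP => _ //; rewrite subr_ge0].
move=> i; rewrite /nuI; case: (i == j); first by rewrite sum_ifeq1.
rewrite big_split /= !sum_ifeq1 //; last by rewrite ltnS ltnW.
by rewrite addrC subrK.
Qed.

Lemma nuI_supp i (d : delay) : (d < m)%N -> nuI j m p i d = 0.
Proof.
move=> dm; rewrite /nuI.
have dD : ((d : nat) == D) = false by apply/negbTE; rewrite neq_ltn (ltn_trans dm mD).
have dm' : ((d : nat) == m) = false by apply/negbTE; rewrite neq_ltn dm.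
by rewrite dD dm'; case: (i == j); rewrite ?addr0.
Qed.

Lemma mu_best : (0 < D)%N -> mu (nuI j m p) j = 1.
Proof.
move=> D0; rewrite /mu /nuI eqxx.
rewrite (sum_ifeq 1 (fun d => d%:R / D%:R)) // mul1r divff //.
by rewrite pnatr_eq0 -lt0n.
Qed.

Lemma mu_other i : (0 < D)%N -> i != j ->
  mu (nuI j m p) i = (p * D%:R + (1 - p) * m%:R) / D%:R.
Proof.
move=> D0 ij; rewrite /mu /nuI (negbTE ij).
under eq_bigr do rewrite mulrDl.
rewrite big_split /= (sum_ifeq p (fun d => d%:R / D%:R)) //.
rewrite (sum_ifeq (1 - p) (fun d => d%:R / D%:R)) //; last by rewrite ltnS ltnW.
by rewrite !mulrA -mulrDl.
Qed.
End Inst.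

Section More.
Variables (R : realFieldType) (K D : nat).
Notation arm := 'I_K.

Lemma path_ge (a b : R) k : b <= a -> path (fun x y : R => y <= x) a (nseq k b).
Proof. by elim: k a => [//|k IH] a ba /=; rewrite ba IH. Qed.

Lemma second_gen (f : arm -> R) (j : arm) a b : (2 <= K)%N -> b <= a -> f j = a ->
  (forall i, i != j -> f i = b) ->
  nth 0 (sort (fun x y : R => y <= x) [seq f i | i <- enum arm]) 1 = b.
Proof.
move=> K2 ba fj fi.
have tot : total (fun x y : R => y <= x) by move=> x y; exact: le_total.
have tr : transitive (fun x y : R => y <= x) by move=> x y z h1 h2; exact: le_trans h2 h1.
have an : antisymmetric (fun x y : R => y <= x) by move=> x y /andP[h1 h2]; apply: le_anti; rewrite h1 h2.
have pe : perm_eq [seq f i | i <- enum arm] (a :: nseq (K.-1) b).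
  have hj : j \in enum arm by rewrite mem_enum.
  apply: (perm_trans (perm_map f (perm_to_rem hj))) => /=.
  rewrite fj perm_cons.
  have -> : [seq f i | i <- rem j (enum arm)] = nseq (size [seq f i | i <- rem j (enum arm)]) b.
    apply/all_pred1P; apply/allP => y /mapP[i hi ->].
    rewrite (mem_rem_uniq _ (enum_uniq _)) inE in hi; case/andP: hi => hi _.
    by rewrite /= fi.
  by rewrite size_map size_rem // size_enum_ord.
rewrite (perm_sortP tot tr an _ _ pe) sorted_sort //; last exact: path_ge.
by rewrite /= nth_nseq; case: K K2 => [|[|k]].
Qed.

Lemma le_bigmax (F : arm -> R) (j : arm) : F j <= \big[Num.max/0]_(i : arm) F i.
Proof.
rewrite unlock /=; have : j \in index_enum arm by rewrite mem_index_enum.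
elim: (index_enum arm) => [//|x s IH] /=; rewrite inE => /orP[/eqP <-|hs].
  by rewrite le_max lexx.
by rewrite le_max IH ?orbT.
Qed.

Lemma sum_drop (alg : policy R K D) o (j : arm) : is_policy alg ->
  \sum_(i | i != j) alg o i = 1 - alg o j.
Proof.
move=> algP; have := proj2 (algP o); rewrite (bigD1 j) //= => <-.
by rewrite addrC addrK.
Qed.

Lemma alg_le1 (alg : policy R K D) o (j : arm) : is_policy alg -> alg o j <= 1.
Proof.
move=> algP; rewrite -subr_ge0 -(sum_drop o j algP); apply: sumr_ge0 => i _.
exact: (proj1 (algP o)).
Qed.

Lemma gap_eq (alg : policy R K D) o (j : arm) (muf : arm -> R) c : is_policy alg ->
  muf j = 1 -> (forall i, i != j -> muf i = c) ->
  1 - \sum_(i : arm) alg o i * muf i = (1 - c) * (1 - alg o j).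
Proof.
move=> algP mj mi; rewrite (bigD1 j) //= mj.
rewrite (eq_bigr (fun i => alg o i * c)); last by move=> i ij; rewrite mi.
rewrite -mulr_suml sum_drop //; ring.
Qed.

Lemma Ub_sum_ge (alg : policy R K D) r a G1 G2 : is_policy alg ->
  (forall a, 1 <= G1 a + G2 a) -> 1 <= Ub alg r a G1 + Ub alg r a G2.
Proof.
move=> algP HG; elim: r a => [|r IH] a /=; first exact: HG.
rewrite -big_split /= -(proj2 (algP (@noobs K D a))); apply: ler_sum => i _.
rewrite -mulrDr -[X in X <= _]mulr1; apply: ler_wpM2l; first exact: (proj1 (algP _)).
exact: IH.
Qed.
End More.

Lemma exists_mn (R : realFieldType) (T : nat) (dbar : R) : 0 <= dbar -> dbar <= T%:R ->
  exists m n : nat, m%:R <= dbar /\ (n <= T)%N /\ (n <= m.+1)%N /\ dbar <= n%:R.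
Proof.
move=> d0; elim: T => [|T IH] dT.
  by exists 0%N, 0%N.
case: (lerP (T.+1)%:R dbar) => h.
  by exists T.+1, T.+1; split.
case: (lerP dbar T%:R) => h2.
  have [m [n [h3 [h4 [h5 h6]]]]] := IH h2.
  by exists m, n; split => //; split => //; apply: (leq_trans h4).
by exists T, T.+1; split; [apply: ltW | split; [ | split; [|apply: ltW]]].
Qed.

Unset Implicit Arguments.

Theorem theorem5 (R : realFieldType) :
  exists c : R, 0 < c /\
  forall (K T D : nat) (dbar : R),
    (2 <= K)%N -> (0 < D)%N ->
    0 <= dbar -> dbar <= D%:R / 2 -> dbar <= T%:R ->
    forall alg : policy R K D, is_policy alg ->
    exists nu : instance R K D,
      is_instance nu /\ second_largest_delay nu = dbar /\
      c * dbar <= pseudo_regret nu alg T.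
Proof.
exists (1 / 4); split; first by lra.
move=> K T D dbar K2 D0 d0 dD dT alg algP.
have [m [n [hm [nT [nm hn]]]]] := exists_mn d0 dT.
have Dr0 : 0 < D%:R :> R by rewrite ltr0n.
have mDr : m%:R < D%:R :> R by lra.
have mD : (m < D)%N by rewrite -(ltr_nat R).
have Dm0 : 0 < D%:R - m%:R :> R by rewrite subr_gt0.
pose p := (dbar - m%:R) / (D%:R - m%:R).
have p0 : 0 <= p by apply: divr_ge0; lra.
have p1 : p <= 1 by rewrite /p ler_pdivrMr //; lra.
have pe : p * (D%:R - m%:R) = dbar - m%:R by rewrite /p divfK // gt_eqF.
have e : (p * D%:R + (1 - p) * m%:R) / D%:R = dbar / D%:R.
  congr (_ / _); transitivity (p * (D%:R - m%:R) + m%:R); first ring.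
  by rewrite pe; ring.
pose gap := 1 - dbar / D%:R.
have gap2 : 1 / 2 <= gap.
  have : dbar / D%:R <= 1 / 2 by rewrite ler_pdivrMr //; lra.
  rewrite /gap; lra.
have reg : forall j : 'I_K,
    gap * \sum_(s < n) Ub alg s [::] (fun a => 1 - alg (@noobs K D a) j)
    <= pseudo_regret (nuI j m p) alg T.
  move=> j; set nu := nuI j m p.
  have nuP : is_instance nu := nuI_inst j mD p0 p1.
  have muj : mu nu j = 1 := mu_best j m p D0.
  have mui : forall i, i != j -> mu nu i = dbar / D%:R.
    by move=> i ij; rewrite (mu_other (j:=j) p mD) // e.
  rewrite /pseudo_regret.
  apply: le_trans (_ : T%:R - expected_reward nu alg T <= _); last first.
    rewrite lerD2r -[X in X <= _]mulr1 ler_wpM2l ?ler0n // -muj.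
    exact: le_bigmax.
  rewrite (ER_Ef nu alg) Ef_sum.
  have -> : T%:R = \sum_(s < T) (1 : R) by rewrite sumr_const card_ord.
  rewrite -sumrB.
  have step : forall s : 'I_T, 1 - Ef nu alg T [::]
      (fun h => (nth 0%N [seq fd x | x <- h] s)%:R / D%:R)
      = gap * Ef nu alg s [::] (fun h => 1 - alg (observe h) j).
    move=> s; rewrite step_Ef // -[in LHS](Ef_const nuP algP s [::] 1) -Ef_sub -Ef_scale.
    apply: Ef_ext => h' _; rewrite /gap.
    by apply: gap_eq.
  rewrite (eq_bigr _ (fun s _ => step s)).
  rewrite -mulr_sumr; apply: ler_wpM2l; first by lra.
  rewrite -(big_mkord xpredT (fun s => Ub alg s [::] (fun a => 1 - alg (@noobs K D a) j))).
  rewrite -(big_mkord xpredT (fun s => Ef nu alg s [::] (fun h => 1 - alg (observe h) j))).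
  rewrite (@big_cat_nat _ _ _ n 0 T _ _ (leq0n n) nT) /=.
  have EU : \sum_(0 <= s < n) Ef nu alg s [::] (fun h => 1 - alg (observe h) j)
          = \sum_(0 <= s < n) Ub alg s [::] (fun a => 1 - alg (@noobs K D a) j).
    apply: eq_big_nat => s /andP[_ sn].
    have sm : (s <= m)%N by rewrite -ltnS (leq_trans sn nm).
    apply: (blind alg nuP (m:=m) (nuI_supp j p mD)); first by rewrite add0n (leq_trans (ltnW sn) nm).
      by [].
    move=> h' sh' ha /=; rewrite (obs_blind (m:=m)) ?sh' //.
    by rewrite /noobs -map_comp.
  rewrite -EU lerDl; apply: sumr_ge0 => s _.
  rewrite -(Ef_const nuP algP s [::] 0); apply: (Ef_mono nuP algP) => h.
  by rewrite subr_ge0 alg_le1.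
pose j0 : 'I_K := Ordinal (leq_trans (isT : (0 < 2)%N) K2).
pose j1 : 'I_K := Ordinal K2.
have j10 : j1 != j0 by [].
pose S0 := \sum_(s < n) Ub alg s [::] (fun a => 1 - alg (@noobs K D a) j0).
pose S1 := \sum_(s < n) Ub alg s [::] (fun a => 1 - alg (@noobs K D a) j1).
have S01 : n%:R <= S0 + S1.
  rewrite /S0 /S1 -big_split /=.
  have -> : n%:R = \sum_(s < n) (1 : R) by rewrite sumr_const card_ord.
  apply: ler_sum => s _; apply: Ub_sum_ge => // a.
  have := alg_le1 (@noobs K D a) j0 algP.
  have : alg (@noobs K D a) j0 + alg (@noobs K D a) j1 <= 1.
    rewrite -(proj2 (algP (@noobs K D a))) (bigD1 j0) //= lerD2l (bigD1 j1) //=.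
    rewrite lerDl; apply: sumr_ge0 => i _; exact: (proj1 (algP _)).
  lra.
have r0 := reg j0; have r1 := reg j1.
have n0 : 0 <= n%:R :> R by rewrite ler0n.
have g1 : gap * n%:R <= gap * (S0 + S1) by rewrite ler_wpM2l //; lra.
have g2 : (1/2) * n%:R <= gap * n%:R by rewrite ler_wpM2r.
have sum_reg : dbar / 2 <= pseudo_regret (nuI j0 m p) alg T + pseudo_regret (nuI j1 m p) alg T.
  rewrite /S0 /S1 in r0 r1 S01 g1; lra.
have sec : forall j : 'I_K, second_largest_delay (nuI (D:=D) j m p) = dbar.
  move=> j; rewrite /second_largest_delay.
  apply: (@second_gen R K (dexp (nuI j m p)) j D%:R dbar K2); first by lra.
    by rewrite /dexp (mu_best j m p D0) mulr1.
  move=> i ij; rewrite /dexp (mu_other (j:=j) p mD) // e mulrC divfK //.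
  by rewrite gt_eqF.
case: (lerP (1/4 * dbar) (pseudo_regret (nuI j0 m p) alg T)) => h.
  by exists (nuI j0 m p); split; [exact: nuI_inst | split].
exists (nuI j1 m p); split; [exact: nuI_inst | split => //].
lra.
Qed.
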